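(* Let $k=\mathbb R$ or $\mathbb C$, let $(V,g)$ be an inner product vector space over $k$, let $f\in\operatorname{End}_k(V)$, and let $\mathcal H_f=\{H_i\}_{i\in I}$ be a family of finite-dimensional $f$-invariant subspaces with $V=\bigoplus_{i\in I}H_i$; write $f_i=f|_{H_i}$ and $\mathcal H_f^\perp=\bigoplus_{i\in I}[\operatorname{Im} f_i]_i^\perp$. Then $\mathcal H_f^\perp=[\operatorname{Im} f]^\perp$ if and only if $[\operatorname{Im} f_i]_i^\perp\subseteq\big[\sum_{j\ne i}\operatorname{Im} f_j\big]^\perp$ for every $i\in I$.
   Context: An inner product is linear in the first argument, conjugate-symmetric and positive definite. $V=\bigoplus_{i\in I}H_i$ means the natural map $\bigoplus H_i\to V$ is an isomorphism. For a subspace $W\subseteq V$, $W^\perp=\{v\in V:g(w,v)=0\ \forall w\in W\}$; for a subspace $W\subseteq H_i$, $[W]_i^\perp=\{v\in H_i:g(w,v)=0\ \forall w\in W\}$. *)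

(* Defs.v *)
From HB Require Import structures.
From mathcomp Require Import all_boot all_order all_algebra.
From mathcomp Require Import boolp classical_sets.
Set Implicit Arguments. Unset Strict Implicit. Unset Printing Implicit Defensive.
Import Order.TTheory GRing.Theory Num.Theory.
Local Open Scope ring_scope.
Local Open Scope classical_set_scope.

Section Defs.
Variables (k : numFieldType) (V : lmodType k).

Definition is_inner_product (conj : k -> k) (g : V -> V -> k) : Prop :=
  [/\ (forall (a : k) (u v w : V), g (a *: u + v) w = a * g u w + g v w),
      (forall u v : V, g u v = conj (g v u)) &
      (forall v : V, v != 0 -> 0 < g v v)].

Definition is_subspace (W : set V) : Prop :=
  W 0 /\ forall (a : k) (u v : V), W u -> W v -> W (a *: u + v).

Definition finite_dim_subspace (W : set V) : Prop :=
  is_subspace W /\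
  exists (n : nat) (e : 'I_n -> V), (forall m, W (e m)) /\
    forall v, W v -> exists c : 'I_n -> k, v = \sum_(m < n) c m *: e m.

Definition sumsp (I : Type) (J : set I) (W : I -> set V) : set V :=
  [set v | exists (n : nat) (idx : 'I_n -> I) (x : 'I_n -> V),
      (forall m, J (idx m) /\ W (idx m) (x m)) /\ v = \sum_(m < n) x m].

(* V is the internal direct sum of the H i: the natural map from the
   external direct sum is surjective and injective. *)
Definition is_direct_sum (I : Type) (H : I -> set V) : Prop :=
  (forall v : V, exists (n : nat) (idx : 'I_n -> I) (x : 'I_n -> V),
      (forall m, H (idx m) (x m)) /\ v = \sum_(m < n) x m) /\
  (forall (n : nat) (idx : 'I_n -> I) (x : 'I_n -> V),
      injective idx -> (forall m, H (idx m) (x m)) ->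
      \sum_(m < n) x m = 0 -> forall m, x m = 0).

Definition orth (g : V -> V -> k) (W : set V) : set V :=
  [set v | forall w, W w -> g w v = 0].

Definition orth_in (g : V -> V -> k) (Hi : set V) (W : set V) : set V :=
  Hi `&` orth g W.

Definition Hf_perp (g : V -> V -> k) (f : V -> V) (I : Type) (H : I -> set V) : set V :=
  sumsp setT (fun i => orth_in g (H i) (f @` H i)).

End Defs.

(* Main.v *)
Require Import Defs.
From HB Require Import structures.
From mathcomp Require Import all_boot all_order all_algebra.
From mathcomp Require Import boolp classical_sets.
Import Order.TTheory GRing.Theory Num.Theory.
Local Open Scope ring_scope.
Local Open Scope classical_set_scope.

Section Aux.
Variables (k : numFieldType) (conj : {rmorphism k -> k}) (V : lmodType k)
  (g : V -> V -> k).
Hypothesis conjK : involutive conj.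
Hypothesis gip : is_inner_product conj g.

Lemma gDl u v w : g (u + v) w = g u w + g v w.
Proof. case: gip => lin _ _; have := lin 1 u v w; by rewrite scale1r mul1r. Qed.

Lemma g0l w : g 0 w = 0.
Proof.
have h := gDl 0 0 w; rewrite addr0 in h.
by apply: (addrI (g 0 w)); rewrite addr0 -h.
Qed.

Lemma gZl a u w : g (a *: u) w = a * g u w.
Proof. case: gip => lin _ _; have := lin a u 0 w; by rewrite addr0 g0l addr0. Qed.

Lemma gsym u v : g u v = conj (g v u).
Proof. by case: gip. Qed.

Lemma gDr w u v : g w (u + v) = g w u + g w v.
Proof. by rewrite gsym gDl rmorphD -!gsym. Qed.

Lemma g0r w : g w 0 = 0.
Proof. by rewrite gsym g0l rmorph0. Qed.

Lemma gZr w a u : g w (a *: u) = conj a * g w u.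
Proof. by rewrite gsym gZl rmorphM -gsym. Qed.

Lemma gNr w u : g w (- u) = - g w u.
Proof. by rewrite -scaleN1r gZr rmorphN1 mulN1r. Qed.

Lemma gBr w u v : g w (u - v) = g w u - g w v.
Proof. by rewrite gDr gNr. Qed.

Lemma gsuml n (F : 'I_n -> V) w :
  g (\sum_(m < n) F m) w = \sum_(m < n) g (F m) w.
Proof. exact: (big_morph (fun u => g u w) (fun u v => gDl u v w) (g0l w)). Qed.

Lemma gsumr n (F : 'I_n -> V) w :
  g w (\sum_(m < n) F m) = \sum_(m < n) g w (F m).
Proof. exact: (big_morph (fun u => g w u) (fun u v => gDr w u v) (g0r w)). Qed.

Lemma gpos v : g v v = 0 -> v = 0.
Proof.
case: gip => _ _ pd h; apply/eqP; apply/negPn/negP => /pd.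
by rewrite h ltxx.
Qed.

Lemma orth_sum n (e : 'I_n -> V) (d : 'I_n -> k) r :
  (forall l, g (e l) r = 0) -> g (\sum_(m < n) d m *: e m) r = 0.
Proof. by move=> h; rewrite gsuml big1 // => m _; rewrite gZl h mulr0. Qed.

Lemma projA n (e : 'I_n -> V) v : exists c : 'I_n -> k,
  forall l, g (e l) (v - \sum_(m < n) c m *: e m) = 0.
Proof.
elim: n e v => [|n IH] e v; first by exists (fun _ => 0) => -[].
pose e' := fun j => e (lift ord0 j).
have [c1 h1] := IH e' v; have [c2 h2] := IH e' (e ord0).
pose S1 := \sum_(m < n) c1 m *: e' m.
pose S2 := \sum_(m < n) c2 m *: e' m.
pose r1 := v - S1. pose y := e ord0 - S2.
pose a := conj (g y r1 / g y y).
exists (fun m => if unlift ord0 m is Some j then c1 j - a * c2 j else a).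
have sumE : \sum_(m < n.+1)
   (if unlift ord0 m is Some j then c1 j - a * c2 j else a) *: e m
   = S1 + a *: y.
  rewrite big_ord_recl unlift_none.
  under eq_bigr => j _ do rewrite liftK.
  rewrite /S1 /S2 /y scalerBr scaler_sumr.
  under eq_bigr => j _ do rewrite scalerBl -scalerA.
  rewrite sumrB /e'; by rewrite addrC -!addrA [X in _ + X]addrC.
rewrite sumE.
have hr' : forall j, g (e' j) (v - (S1 + a *: y)) = 0.
  move=> j; rewrite opprD addrA gBr gZr h1 /y h2 mulr0 subr0 //.
move=> l; case: (unliftP ord0 l) => [j ->|->]; first exact: hr'.
have -> : e ord0 = y + S2 by rewrite /y subrK.
rewrite gDl.
have -> : g S2 (v - (S1 + a *: y)) = 0 by exact: (@orth_sum _ _ c2 _ hr').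
rewrite addr0 opprD addrA gBr gZr /a conjK.
case: (eqVneq (g y y) 0) => [yy|yy].
  by rewrite (gpos _ yy) !g0l mulr0 subr0.
by rewrite -/r1 divfK // subrr.
Qed.

End Aux.

Theorem lemma3p18 (k : numFieldType) (conj : {rmorphism k -> k})
  (V : lmodType k) (g : V -> V -> k) (f : {linear V -> V})
  (I : Type) (H : I -> set V) :
  involutive conj ->
  is_inner_product conj g ->
  (forall i, finite_dim_subspace (H i)) ->
  (forall i v, H i v -> H i (f v)) ->
  is_direct_sum H ->
  (Hf_perp g f H = orth g (range f) <->
   forall i, orth_in g (H i) (f @` H i)
             `<=` orth g (sumsp [set j | j <> i] (fun j => f @` H j))).
Proof.
move=> conjK gip fdH finv [dsurj dinj].
have rangeP_sum : forall n (F : 'I_n -> V), (forall m, range f (F m)) ->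
    range f (\sum_(m < n) F m).
  move=> n F hF; apply: big_ind => //.
    by exists 0 => //; rewrite raddf0.
  by move=> _ _ [a _ <-] [b _ <-]; exists (a + b) => //; rewrite linearD.
have Hsum : forall i n (F : 'I_n -> V), (forall m, H i (F m)) ->
    H i (\sum_(m < n) F m).
  move=> i n F hF; have [[H0 Hc] _] := fdH i; apply: big_ind => //.
  by move=> a b ha hb; have := Hc 1 a b ha hb; rewrite scale1r.
have HZ : forall i a u, H i u -> H i (a *: u).
  move=> i a u hu; have [[H0 Hc] _] := fdH i.
  by have := Hc a u 0 hu H0; rewrite addr0.
have HB : forall i u v, H i u -> H i v -> H i (u - v).
  move=> i u v hu hv; have [[H0 Hc] _] := fdH i.
  by have := Hc (-1) v u hv hu; rewrite scaleN1r addrC.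
have incl1 : (forall i, orth_in g (H i) (f @` H i)
             `<=` orth g (sumsp [set j | j <> i] (fun j => f @` H j))) ->
    Hf_perp g f H `<=` orth g (range f).
  move=> hc v [n [idx [x [hx ->]]]] w [u _ <-].
  have [p [jdx [y [hy ->]]]] := dsurj u.
  rewrite linear_sum (@gsuml _ _ _ _ gip); apply: big1 => l _.
  rewrite (@gsumr _ _ _ _ gip); apply: big1 => m _.
  have [hH ho] := (hx m).2.
  case: (pselect (jdx l = idx m)) => e.
    by apply: ho; exists (y l) => //; rewrite -e; exact: hy.
  apply: (hc (idx m) (x m) (hx m).2).
  exists 1%N, (fun _ => jdx l), (fun _ => f (y l)); split; last by rewrite big_ord1.
  move=> _; split; first exact: e.
  by exists (y l).
split.
  move=> eq i x hx w [n [idx [z [hz ->]]]].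
  have : Hf_perp g f H x.
    exists 1%N, (fun _ => i), (fun _ => x); split; last by rewrite big_ord1.
    by move=> _; split.
  rewrite eq => hx'; apply: hx'; apply: rangeP_sum => m.
  by case: (hz m) => _ [u _ <-]; exists u.
move=> hc; apply/seteqP; split; first exact: incl1.
move=> v hv.
have proj : forall i x, H i x -> exists w, range f w /\
    orth_in g (H i) (f @` H i) (x - w).
  move=> i x hxi; have [_ [n [e [he espan]]]] := fdH i.
  have [c hc'] := @projA _ _ _ _ conjK gip _ (fun l => f (e l)) x.
  exists (\sum_(m < n) c m *: f (e m)); split.
    exists (\sum_(m < n) c m *: e m) => //; rewrite linear_sum.
    by apply: eq_bigr => m _; rewrite linearZ.
  split.
    apply: HB => //; apply: Hsum => m; apply: HZ; apply: finv; apply: he.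
  move=> w [y hy <-]; have [d ->] := espan y hy; rewrite linear_sum.
  under eq_bigr => m _ do rewrite linearZ.
  exact: (@orth_sum _ _ _ _ gip).
move: hv; have [n [idx [x [hx ->]]]] := dsurj v => hv.
have /choice [W hW] : forall m, exists w, range f w /\
    orth_in g (H (idx m)) (f @` H (idx m)) (x m - w) := fun m => proj _ _ (hx m).
pose R := \sum_(m < n) (x m - W m).
have hR : Hf_perp g f H R.
  exists n, idx, (fun m => x m - W m); split => // m; split => //; exact: (hW m).2.
have hRo := incl1 hc R hR.
have hdiff : \sum_(m < n) x m - R = \sum_(m < n) W m.
  by rewrite /R sumrB opprB addrC subrK.
have rW : range f (\sum_(m < n) W m) := rangeP_sum _ _ (fun m => (hW m).1).
have h0 : g (\sum_(m < n) W m) (\sum_(m < n) W m) = 0.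
  by rewrite -{2}hdiff (@gBr _ _ _ _ gip) (hv _ rW) (hRo _ rW) subrr.
have := @gpos _ _ _ _ gip _ h0; rewrite -hdiff => /eqP; rewrite subr_eq0 => /eqP ->.
exact: hR.
Qed.
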